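(* Let $G = T\times H$, where $T$ is a finite $2$-group and $H$ is a finite group of odd order. Then \[ \mathsf{GEN}(G)=\begin{cases} *1, & \text{if } |G| \text{ is odd and } d(G)\ge 3,\\ *1, & \text{if } G\cong \mathbb{Z}_{4k} \text{ for some integer } k\ge 1,\\ *1, & \text{if } G\cong \mathbb{Z}_2^2\times H \text{ with } d(H)\le 2,\\ *2, & \text{if } G\cong \mathbb{Z}_2,\\ *2, & \text{if } |G| \text{ is odd and } d(G)\in\{1,2\},\\ *4, & \text{if } G\cong \mathbb{Z}_{4k+2} \text{ for some integer } k\ge 1,\\ *0, & \text{otherwise.} \end{cases} \]
   Context: For a finite group $G$, $\mathsf{GEN}(G)$ is the following impartial two-player game. A position is a set of elements selected so far; the starting position is $\emptyset$. From a position $P$ with $\langle P\rangle\neq G$, the player to move selects some $g\in G\setminus P$, producing the position $P\cup\{g\}$ (these are the options of $P$); a position $P$ with $\langle P\rangle = G$ has no options. The player who makes the selected set generate $G$ wins (equivalently, the player unable to move loses). The nim-number of a position is defined recursively by $\operatorname{nim}(P)=\operatorname{mex}\{\operatorname{nim}(Q): Q \text{ an option of } P\}$, where $\operatorname{mex}(A)$ is the least nonnegative integer not in $A$ (so positions with no options have nim-number $0$). We write $\mathsf{GEN}(G)=*n$ if $\operatorname{nim}(\emptyset)=n$. $d(G)$ denotes the minimum size of a generating set of $G$ (with $d(G)=0$ for trivial $G$). $\mathbb{Z}_n$ is the cyclic group of order $n$. *)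

(* Defs.v *)
From mathcomp Require Import all_boot all_fingroup all_algebra all_solvable.
Set Implicit Arguments. Unset Strict Implicit. Unset Printing Implicit Defensive.
Local Open Scope group_scope.

(* mex of a finite list of naturals: least n not in s (always <= size s). *)
Definition mex (s : seq nat) : nat :=
  find (fun n => n \notin s) (iota 0 (size s).+1).

Section Gen.
Variable gT : finGroupType.
Variable G : {group gT}.

(* Positions with <<P>> = G have no options (nim 0); otherwise the options
   are P :|: {g} for g in G \ P. Fuel #|G :\: P|.+1 always suffices. *)
Fixpoint nim_fuel (n : nat) (P : {set gT}) : nat :=
  match n with
  | 0 => 0
  | n'.+1 =>
      if <<P>> == G :> {set gT} then 0
      else mex [seq nim_fuel n' (g |: P) | g <- enum (G :\: P)]
  end.

Definition nim_pos (P : {set gT}) : nat := nim_fuel #|G|.+1 P.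

(* GEN(G) = * nimGEN G *)
Definition nimGEN : nat := nim_pos set0.

Definition dgen : nat :=
  find (fun n => [exists A : {set gT},
                   [&& A \subset G, #|A| == n & <<A>> == G :> {set gT}]])
       (iota 0 #|G|.+1).
End Gen.

(* Main.v *)
Require Import Defs.
From mathcomp Require Import all_boot all_fingroup all_algebra all_solvable.
From mathcomp Require Import zify.
Local Open Scope group_scope.
Set Implicit Arguments. Unset Strict Implicit. Unset Printing Implicit Defensive.

Lemma find_iota_min (P : pred nat) m N :
  P m -> (forall k, k < m -> ~~ P k) -> m < N -> find P (iota 0 N) = m.
Proof.
move=> Pm notP ltmN.
have hasP : has P (iota 0 N).
  by apply/hasP; exists m => //; rewrite mem_iota.
have ltj := hasP; rewrite has_find size_iota in ltj.
have Pj := nth_find 0 hasP; rewrite nth_iota // add0n in Pj.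
case: (ltngtP (find P (iota 0 N)) m) => // [ltjm|ltmj].
  by move: (notP _ ltjm); rewrite Pj.
have := before_find 0 ltmj; rewrite nth_iota ?add0n ?Pm //.
Qed.

Lemma mex_eq (s : seq nat) v :
  v \notin s -> (forall k, k < v -> k \in s) -> mex s = v.
Proof.
move=> vs ks; rewrite /mex; apply: find_iota_min => //.
- by move=> k /ks ->.
- rewrite ltnS; have <- : size (iota 0 v) = v by rewrite size_iota.
  apply: uniq_leq_size; first exact: iota_uniq.
  by move=> k; rewrite mem_iota add0n => /ks.
Qed.

Section Reld.
Variable gT : finGroupType.
Implicit Types K : {group gT}.
Implicit Types Y Z A : {set gT}.

Definition reldP K Y : pred nat := fun n =>
  [exists A : {set gT}, [&& A \subset K, #|A| == n & K \subset <<Y :|: A>>]].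

Lemma reld_ex K Y : exists n, reldP K Y n.
Proof.
exists #|K|; apply/existsP; exists (K : {set gT}).
by rewrite subxx eqxx /= sub_gen // subsetUr.
Qed.

Definition reld K Y := ex_minn (reld_ex K Y).

Lemma reld_wit K Y : exists A, [/\ A \subset K, #|A| = reld K Y & K \subset <<Y :|: A>>].
Proof.
rewrite /reld; case: ex_minnP => n /existsP[A /and3P[sAK /eqP cA sK]] _.
by exists A.
Qed.

Lemma reld_min K Y A : A \subset K -> K \subset <<Y :|: A>> -> reld K Y <= #|A|.
Proof.
move=> sAK sK; rewrite /reld; case: ex_minnP => n _ /(_ #|A|); apply.
by apply/existsP; exists A; rewrite sAK eqxx.
Qed.

Lemma genU_gen Y A : <<<<Y>> :|: A>> = <<Y :|: A>>.
Proof.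
apply/eqP; rewrite eqEsubset !gen_subG; apply/andP; split.
  by rewrite subUset gen_subG !(subset_trans _ (subset_gen _)) ?subsetUl ?subsetUr.
exact: subset_trans (setSU _ (subset_gen Y)) (subset_gen _).
Qed.

Lemma reld_gen K Y Z : <<Y>> = <<Z>> -> reld K Y = reld K Z.
Proof.
move=> eYZ; apply/eqP; rewrite eqn_leq; apply/andP; split.
  have [A [sAK <- sK]] := reld_wit K Z.
  by apply: reld_min sAK _; rewrite -genU_gen eYZ genU_gen.
have [A [sAK <- sK]] := reld_wit K Y.
by apply: reld_min sAK _; rewrite -genU_gen -eYZ genU_gen.
Qed.

Lemma reld_mono K Y Z : Y \subset Z -> reld K Z <= reld K Y.
Proof.
move=> sYZ; have [A [sAK <- sK]] := reld_wit K Y.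
apply: reld_min sAK _; apply: subset_trans sK _; apply: genS; exact: setSU.
Qed.

Lemma reld_add K Y y : y \in K -> reld K Y <= (reld K (y |: Y)).+1.
Proof.
move=> Ky; have [A [sAK <- sK]] := reld_wit K (y |: Y).
apply: leq_trans (reld_min (A := y |: A) _ _) _.
- by rewrite subUset sub1set Ky.
- by apply: subset_trans sK _; apply: genS; rewrite setUA [Y :|: _]setUC -setUA.
- by rewrite cardsU1 -addn1 addnC leq_add2l leq_b1.
Qed.

Lemma reld_drop K Y : 0 < reld K Y ->
  exists2 y, y \in K & reld K (y |: Y) = (reld K Y).-1.
Proof.
move=> rpos; have [A [sAK cA sK]] := reld_wit K Y.
have /card_gt0P[y Ay] : 0 < #|A| by rewrite cA.
exists y; first by apply: (subsetP sAK).
apply/eqP; rewrite eqn_leq; apply/andP; split.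
  have -> : (reld K Y).-1 = #|A :\ y| by rewrite -cA (cardsD1 y A) Ay.
  apply: reld_min; first by apply: subset_trans sAK; apply: subsetDl.
  apply: subset_trans sK _; apply: genS.
  apply/subsetP=> x; rewrite !inE => /orP[->|Ax]; first by rewrite orbT.
  by case: eqP => //= _; rewrite Ax orbT.
by rewrite -ltnS prednK // (reld_add _ (subsetP sAK y Ay)).
Qed.

Lemma reld0 K Y : (reld K Y == 0) = (K \subset <<Y>>).
Proof.
apply/eqP/idP => [r0 | sK].
  have [A [sAK cA sK]] := reld_wit K Y.
  by move: cA; rewrite r0 => /eqP; rewrite cards_eq0 => /eqP A0; rewrite A0 setU0 in sK.
apply/eqP; rewrite -leqn0 -(cards0 gT); apply: reld_min; rewrite ?sub0set //.
by rewrite setU0.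
Qed.

End Reld.

Section Table.
Local Open Scope nat_scope.
Definition gv (a b : nat) (p : bool) : nat :=
  if p then (match a, b with 0, 0 => 0 | _, _ => if (a <= 2) && (b <= 2) then 2 else 1 end)
  else (match a, b with 0, 1 | 1, 0 | 1, 1 => 1 | _, _ => 0 end).
Definition hv (a b : nat) (p : bool) : nat :=
  match a with
  | 0 => if p then (match b with 1 => 1 | _ => 0 end)
         else (match b with 0 => 0 | 1 | 2 => 2 | _ => 1 end)
  | 1 => if p then (match b with 0 => 1 | 1 => 3 | 2 => 2 | _ => 1 end)
         else (match b with 0 => 2 | 1 => 4 | _ => 0 end)
  | 2 => if p then (match b with 0 | 1 => 0 | 2 | 3 => 2 | _ => 1 end)
         else (match b with 0 | 1 | 2 => 1 | _ => 0 end)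
  | _ => if p then 1 else 0
  end.
Definition fv (phi : bool) a b (e p : bool) := if e || phi then gv a b p else hv a b p.

Lemma fv_succ phi a b e p (da db ee : bool) :
 (~~ e && phi) ==> (0 < a) -> (0 < a) || (0 < b) ->
 da <= a -> db <= b -> (da ==> ee) -> (e ==> ee) -> (~~ da && ~~ e && ee ==> phi) ->
 fv phi (a - da) (b - db) ee (~~ p) != fv phi a b e p.
Proof.
case: phi; case: e; case: p; case: da; case: db; case: ee;
case: a => [|[|[|[|a]]]]; case: b => [|[|[|[|[|b]]]]]; by [].
Qed.

Lemma fv_must phi a b e p k : (~~e && phi) ==> (0<a) -> (0<a)||(0<b) ->
 k < fv phi a b e p ->
 [|| [&& 0 < a & fv phi a.-1 b true (~~p) == k],
     [&& 0<a, 0<b & fv phi a.-1 b.-1 true (~~p) == k],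
     [&& 0<b & fv phi a b.-1 e (~~p) == k],
     [&& p == e & fv phi a b e (~~p) == k],
     [&& ~~e, phi & fv phi a b true (~~p) == k] |
     [&& ~~e, phi, 0<b & fv phi a b.-1 true (~~p) == k]].
Proof.
case: phi; case: e; case: p;
case: a => [|[|[|[|a]]]]; case: b => [|[|[|[|[|b]]]]];
case: k => [|[|[|[|k]]]]; by [].
Qed.

Lemma fv00 phi e p : fv phi 0 0 e p = 0.
Proof. by case: phi; case: e; case: p. Qed.

Lemma fv_succ' phi a b e p a' b' e' :
 (~~ e && phi) ==> (0 < a) -> (0 < a) || (0 < b) ->
 a' <= a <= a'.+1 -> b' <= b <= b'.+1 -> ((a' < a) ==> e') -> (e ==> e') ->
 ((a' == a) && ~~ e && e' ==> phi) ->
 fv phi a' b' e' (~~ p) != fv phi a b e p.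
Proof.
move=> v nz ha hb h1 h2 h3.
have [da [Ea hda Eda]] : exists da : bool, [/\ a' = a - da, da <= a & da = (a' < a)].
  case: (boolP (a' < a)) => lt.
    by exists true; split => //; move: ha => /andP[? ?]; simpl; lia.
  by exists false; split => //; move: ha => /andP[? ?]; lia.
have [db [Eb hdb]] : exists db : bool, a' = a' /\ (b' = b - db /\ db <= b).
  case: (boolP (b' < b)) => lt.
    by exists true; split => //; move: hb => /andP[? ?]; simpl; lia.
  by exists false; split => //; move: hb => /andP[? ?]; lia.
case: hdb => Eb' hdb.
rewrite Eb' Ea; apply: fv_succ => //; first by rewrite Eda.
rewrite Eda; case: (boolP (a' < a)) => //= lt; case: (boolP e) => //= ne.
by move: h3; rewrite ne /= andbT; have -> : a' == a by move: ha => /andP[? ?]; lia.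
Qed.

End Table.


Section Game.
Variables (gT : finGroupType) (G T H : {group gT}).
Hypotheses (hG : T \x H = G) (hT : 2.-group T) (hH : odd #|H|).

Lemma cfT : trivm H @* H \subset 'C(idm T @* T).
Proof. by rewrite morphim_trivm sub1G. Qed.
Definition pT := dprodm hG cfT.
Lemma cfH : idm H @* H \subset 'C(trivm T @* T).
Proof. by rewrite morphim_trivm cents1. Qed.
Definition pH := dprodm hG cfH.

Lemma pTE t h : t \in T -> h \in H -> pT (t * h) = t.
Proof. by move=> Tt Hh; rewrite /pT dprodmE //= mulg1. Qed.
Lemma pHE t h : t \in T -> h \in H -> pH (t * h) = h.
Proof. by move=> Tt Hh; rewrite /pH dprodmE //= mul1g. Qed.
Lemma pT_T t : t \in T -> pT t = t.
Proof. by move=> Tt; rewrite -{1}[t]mulg1 pTE ?group1. Qed.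
Lemma pT_H h : h \in H -> pT h = 1.
Proof. by move=> Hh; rewrite -{1}[h]mul1g pTE ?group1. Qed.
Lemma pH_T t : t \in T -> pH t = 1.
Proof. by move=> Tt; rewrite -{1}[t]mulg1 pHE ?group1. Qed.
Lemma pH_H h : h \in H -> pH h = h.
Proof. by move=> Hh; rewrite -{1}[h]mul1g pHE ?group1. Qed.

Lemma decomp x : x \in G -> [/\ pT x \in T, pH x \in H & x = pT x * pH x].
Proof.
move=> Gx; have [t [h [Tt Hh -> _]]] := mem_dprod hG Gx.
by rewrite pTE ?pHE.
Qed.

Lemma TG : T \subset G. Proof. by case/dprod_normal2: hG => /andP[]. Qed.
Lemma HG : H \subset G. Proof. by case/dprod_normal2: hG => _ /andP[]. Qed.
Lemma cTH : H \subset 'C(T). Proof. by case/dprodP: hG. Qed.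

Lemma odd_2'group : (2^').-group H.
Proof. by rewrite /pgroup -odd_2'nat. Qed.

Lemma pT_cyc x : x \in G -> pT x \in <[x]>.
Proof.
move=> Gx; have [t [h [Tt Hh -> _]]] := mem_dprod hG Gx.
rewrite pTE //.
have cth : commute t h by apply: commute_sym; apply: (centsP cTH) h Hh t Tt.
have e : (t * h).`_2 = t.
  rewrite consttM // constt_p_elt ?(mem_p_elt hT) //.
  by have /constt1P -> := mem_p_elt odd_2'group Hh; rewrite mulg1.
rewrite -{1}e; exact: cycle_constt.
Qed.

Lemma pTG : pT @* G = T.
Proof. by rewrite /pT im_dprodm morphim_idm // morphim_trivm mulg1. Qed.
Lemma pHG : pH @* G = H.
Proof. by rewrite /pH im_dprodm morphim_idm // morphim_trivm mul1g. Qed.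

Lemma pH_cyc x : x \in G -> pH x \in <[x]>.
Proof.
move=> Gx; have [Tt Hh ex] := decomp Gx.
have: pT x \in <[x]> by apply: pT_cyc.
move=> Tx; have e2 : (pT x)^-1 * x = pH x by rewrite [X in _ * X]ex mulKg.
by rewrite -e2 groupM ?groupV // cycle_id.
Qed.

Lemma elt2_ne1_even (u : gT) (K : {group gT}) : u \in T -> u != 1 -> u \in K -> ~~ odd #|K|.
Proof.
move=> Tu u1 Ku; have u2 : 2.-elt u := mem_p_elt hT Tu.
apply: contra u1 => oK.
have : odd #[u] by apply: dvdn_odd (order_dvdG Ku) oK.
rewrite odd_2'nat => u2'.
apply/eqP; rewrite -(constt_p_elt u2); apply/constt1P; exact: u2'.
Qed.

Lemma e_char (P : {set gT}) : P \subset G -> (~~ odd #|<<P>>|) = [exists x in P, pT x != 1].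
Proof.
move=> sPG; apply/idP/idP.
  apply: contraR; rewrite negb_exists_in => /forall_inP all1.
  have sPH : P \subset H.
    apply/subsetP=> x Px; have [_ Hx ex] := decomp (subsetP sPG x Px).
    by rewrite ex (eqP (negbNE (all1 x Px))) mul1g.
  by apply: oddSg hH; rewrite gen_subG.
case/exists_inP=> x Px ne1.
have Gx := subsetP sPG x Px.
apply: (elt2_ne1_even (u := pT x)) ne1 _; first by case: (decomp Gx).
have := pT_cyc Gx; apply/subsetP; rewrite cycle_subG.
exact: (subsetP (subset_gen P)).
Qed.

Definition aP (P : {set gT}) := reld T (pT @: P).
Definition bP (P : {set gT}) := reld H (pH @: P).
Definition eP (P : {set gT}) := ~~ odd #|<<P>>|.
Definition pP (P : {set gT}) := odd #|P|.
Definition D := reld T set0.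
Definition phi := [exists t in T, (t != 1) && (reld T [set t] == D)].

Lemma aP_le (P : {set gT}) : aP P <= D.
Proof. exact: reld_mono (sub0set _). Qed.

Lemma gen_triv (Y : {set gT}) : Y \subset [1] -> <<Y>> = <<set0>>.
Proof.
by move=> sY1; rewrite gen0; apply/trivgP; rewrite gen_subG.
Qed.

Lemma eP_a (P : {set gT}) : P \subset G -> ~~ eP P -> aP P = D.
Proof.
move=> sPG; rewrite /eP e_char // negb_exists_in => /forall_inP all1.
rewrite /aP /D; apply: reld_gen; apply: gen_triv.
apply/subsetP=> y /imsetP[x Px ->]; rewrite inE; exact: negbNE (all1 x Px).
Qed.

Lemma e_phi (P : {set gT}) : P \subset G -> eP P -> aP P = D -> phi.
Proof.
move=> sPG; rewrite /eP e_char // => /exists_inP[x Px ne1] aD.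
apply/exists_inP; exists (pT x); first by case: (decomp (subsetP sPG x Px)).
rewrite ne1 /= eqn_leq; apply/andP; split; first exact: reld_mono (sub0set _).
rewrite -aD /aP; apply: reld_mono; by rewrite sub1set imset_f.
Qed.

Lemma gen_iff (P : {set gT}) : P \subset G ->
  (<<P>> == G :> {set gT}) = (aP P == 0) && (bP P == 0).
Proof.
move=> sPG; rewrite /aP /bP !reld0; apply/eqP/andP => [genP | [sT sH]].
  rewrite -!morphimEsub // -!morphim_gen // genP pTG pHG; split; exact: subxx.
have sIP (f : {morphism G >-> gT}) :
    (forall x, x \in G -> f x \in <[x]>) -> <<f @: P>> \subset <<P>>.
  move=> fc; rewrite gen_subG; apply/subsetP=> y /imsetP[x Px ->].
  have Gx := subsetP sPG x Px.
  by apply: (subsetP _ _ (fc x Gx)); rewrite cycle_subG mem_gen.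
apply/eqP; rewrite eqEsubset gen_subG sPG /= -(dprodW hG) mul_subG //.
  exact: subset_trans sT (sIP _ pT_cyc).
exact: subset_trans sH (sIP _ pH_cyc).
Qed.


Lemma gen_1U (Y : {set gT}) : <<1 |: Y>> = <<Y>>.
Proof.
apply/eqP; rewrite eqEsubset; apply/andP; split; last by apply: genS; apply: subsetUr.
by rewrite gen_subG subUset sub1set group1 subset_gen.
Qed.

Lemma gen_U1_in (g : gT) (Y : {set gT}) : g \in <<Y>> -> <<g |: Y>> = <<Y>>.
Proof.
move=> gY; apply/eqP; rewrite eqEsubset; apply/andP; split; last by apply: genS; apply: subsetUr.
by rewrite gen_subG subUset sub1set gY subset_gen.
Qed.

Lemma gen_U1_triv (t : gT) (Y : {set gT}) : Y \subset [1] -> <<t |: Y>> = <<[set t]>>.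
Proof.
move=> sY1; apply/eqP; rewrite eqEsubset; apply/andP; split; last by apply: genS; apply: subsetUl.
rewrite gen_subG subUset sub1set mem_gen ?set11 //=; apply: subset_trans sY1 _.
by rewrite sub1set group1.
Qed.

Lemma aP_U1 (P : {set gT}) g : aP (g |: P) = reld T (pT g |: pT @: P).
Proof. by rewrite /aP imsetU1. Qed.
Lemma bP_U1 (P : {set gT}) g : bP (g |: P) = reld H (pH g |: pH @: P).
Proof. by rewrite /bP imsetU1. Qed.

Lemma aP_succ (P : {set gT}) g : g \in G -> aP (g |: P) <= aP P <= (aP (g |: P)).+1.
Proof.
move=> Gg; rewrite aP_U1 /aP reld_mono ?subsetUr //= reld_add //.
by case: (decomp Gg).
Qed.
Lemma bP_succ (P : {set gT}) g : g \in G -> bP (g |: P) <= bP P <= (bP (g |: P)).+1.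
Proof.
move=> Gg; rewrite bP_U1 /bP reld_mono ?subsetUr //= reld_add //.
by case: (decomp Gg).
Qed.
Lemma eP_succ (P : {set gT}) g : P \subset G -> g \in G -> eP P -> eP (g |: P).
Proof.
move=> sPG Gg; rewrite /eP !e_char ?subUset ?sub1set ?Gg //.
by case/exists_inP=> x Px ne; apply/exists_inP; exists x; rewrite ?setU1r.
Qed.
Lemma pP_succ (P : {set gT}) g : g \notin P -> pP (g |: P) = ~~ pP P.
Proof. by move=> gP; rewrite /pP cardsU1 gP add1n. Qed.

Lemma eP_of_lt (Q : {set gT}) : Q \subset G -> aP Q < D -> eP Q.
Proof.
move=> sQG lt; case: (boolP (eP Q)) => // ne; move: lt; rewrite eP_a //.
by rewrite ltnn.
Qed.

Lemma notin_drop (P : {set gT}) (g : gT) :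
  aP (g |: P) != aP P -> g \in G -> g \notin P.
Proof.
move=> ne Gg; apply: contra ne => gP; rewrite aP_U1.
by have /setUidPr -> : [set pT g] \subset pT @: P by rewrite sub1set imset_f.
Qed.
Lemma notin_dropb (P : {set gT}) (g : gT) :
  bP (g |: P) != bP P -> g \in G -> g \notin P.
Proof.
move=> ne Gg; apply: contra ne => gP; rewrite bP_U1.
by have /setUidPr -> : [set pH g] \subset pH @: P by rewrite sub1set imset_f.
Qed.

Lemma real_a (P : {set gT}) : P \subset G -> 0 < aP P -> exists g,
  [/\ g \in G, g \notin P, aP (g |: P) = (aP P).-1, bP (g |: P) = bP P & eP (g |: P)].
Proof.
move=> sPG apos; have [t Tt drop] := reld_drop apos.
have Gt := subsetP TG t Tt.
have aQ : aP (t |: P) = (aP P).-1 by rewrite aP_U1 pT_T.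
exists t; split => //.
- by apply: (notin_drop _ Gt); rewrite aQ; lia.
- by rewrite bP_U1 pH_T // /bP; apply: reld_gen; rewrite gen_1U.
- apply: eP_of_lt; first by rewrite subUset sub1set Gt.
  by rewrite aQ; apply: leq_trans (aP_le P); rewrite prednK.
Qed.

Lemma eP_U1_1 (P : {set gT}) g : P \subset G -> g \in G -> pT g = 1 -> eP (g |: P) = eP P.
Proof.
move=> sPG Gg pg1; rewrite /eP !e_char ?subUset ?sub1set ?Gg //.
apply/exists_inP/exists_inP => [[x xQ ne]|[x Px ne]]; last by exists x; rewrite ?setU1r.
case/setU1P: xQ => [exg|Px]; first by move: ne; rewrite exg pg1 eqxx.
by exists x.
Qed.

Lemma real_b (P : {set gT}) : P \subset G -> 0 < bP P -> exists g,
  [/\ g \in G, g \notin P, aP (g |: P) = aP P, bP (g |: P) = (bP P).-1 & eP (g |: P) = eP P].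
Proof.
move=> sPG bpos; have [h Hh drop] := reld_drop bpos.
have Gh := subsetP HG h Hh.
have bQ : bP (h |: P) = (bP P).-1 by rewrite bP_U1 pH_H.
exists h; split => //.
- by apply: (notin_dropb _ Gh); rewrite bQ; lia.
- by rewrite aP_U1 pT_H // /aP; apply: reld_gen; rewrite gen_1U.
- by rewrite eP_U1_1 // pT_H.
Qed.

Lemma real_ab (P : {set gT}) : P \subset G -> 0 < aP P -> 0 < bP P -> exists g,
  [/\ g \in G, g \notin P, aP (g |: P) = (aP P).-1, bP (g |: P) = (bP P).-1 & eP (g |: P)].
Proof.
move=> sPG apos bpos; have [t Tt dropa] := reld_drop apos.
have [h Hh dropb] := reld_drop bpos.
have Gg : t * h \in G by apply: groupM; [exact: (subsetP TG) | exact: (subsetP HG)].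
have aQ : aP (t * h |: P) = (aP P).-1 by rewrite aP_U1 pTE.
exists (t * h); split => //.
- by apply: (notin_drop _ Gg); rewrite aQ; lia.
- by rewrite bP_U1 pHE.
- apply: eP_of_lt; first by rewrite subUset sub1set Gg.
  by rewrite aQ; apply: leq_trans (aP_le P); rewrite prednK.
Qed.

Lemma real_stay (P : {set gT}) : P \subset G -> pP P = eP P -> exists g,
  [/\ g \in G, g \notin P, aP (g |: P) = aP P, bP (g |: P) = bP P & eP (g |: P) = eP P].
Proof.
move=> sPG pe.
have : ~~ (<<P>> \subset P).
  apply/negP => sGP; have eq : <<P>> = P by apply/eqP; rewrite eqEsubset sGP subset_gen.
  by move: pe; rewrite /pP /eP eq; case: (odd #|P|).
case/subsetPn => g gP gnP.
have Gg : g \in G by apply: (subsetP _ g gP); rewrite gen_subG.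
have pTin (f : {morphism G >-> gT}) : f g \in <<f @: P>>.
  by rewrite -morphimEsub // -morphim_gen // mem_morphim.
exists g; split => //.
- by rewrite aP_U1 /aP; apply: reld_gen; rewrite gen_U1_in ?(pTin pT).
- by rewrite bP_U1 /bP; apply: reld_gen; rewrite gen_U1_in ?(pTin pH).
- by rewrite /eP gen_U1_in.
Qed.

Lemma phi_wit : phi -> exists2 t, t \in T & (t != 1) && (reld T [set t] == D).
Proof. by case/exists_inP => t Tt h; exists t. Qed.

Lemma e0_triv (P : {set gT}) : P \subset G -> ~~ eP P -> pT @: P \subset [1].
Proof.
move=> sPG; rewrite /eP e_char // negb_exists_in => /forall_inP all1.
apply/subsetP=> y /imsetP[x Px ->]; rewrite inE; exact: negbNE (all1 x Px).
Qed.

Lemma real_phi (P : {set gT}) : P \subset G -> ~~ eP P -> phi -> exists g,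
  [/\ g \in G, g \notin P, aP (g |: P) = aP P, bP (g |: P) = bP P & eP (g |: P)].
Proof.
move=> sPG ne ph; have [t Tt /andP[t1 /eqP rt]] := phi_wit ph.
have Gt := subsetP TG t Tt.
have tr := e0_triv sPG ne.
exists t; split => //.
- apply/negP => tP; move/subsetP: tr => /(_ (pT t)); rewrite imset_f // inE pT_T //.
  by move/(_ isT); apply/negP.
- by rewrite aP_U1 eP_a // -rt pT_T //; apply: reld_gen; rewrite gen_U1_triv.
- by rewrite bP_U1 pH_T // /bP; apply: reld_gen; rewrite gen_1U.
- rewrite /eP e_char ?subUset ?sub1set ?Gt //; apply/exists_inP; exists t.
    by rewrite setU11.
  by rewrite pT_T.
Qed.

Lemma real_phib (P : {set gT}) : P \subset G -> ~~ eP P -> phi -> 0 < bP P -> exists g,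
  [/\ g \in G, g \notin P, aP (g |: P) = aP P, bP (g |: P) = (bP P).-1 & eP (g |: P)].
Proof.
move=> sPG ne ph bpos; have [t Tt /andP[t1 /eqP rt]] := phi_wit ph.
have [h Hh dropb] := reld_drop bpos.
have Gg : t * h \in G by apply: groupM; [exact: (subsetP TG) | exact: (subsetP HG)].
have tr := e0_triv sPG ne.
exists (t * h); split => //.
- apply/negP => tP; move/subsetP: tr => /(_ (pT (t * h))); rewrite imset_f // inE pTE //.
  by move/(_ isT); apply/negP.
- by rewrite aP_U1 eP_a // -rt pTE //; apply: reld_gen; rewrite gen_U1_triv.
- by rewrite bP_U1 pHE.
- rewrite /eP e_char ?subUset ?sub1set ?Gg //; apply/exists_inP; exists (t * h).
    by rewrite setU11.
  by rewrite pTE.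
Qed.


Lemma validP (P : {set gT}) : P \subset G -> (~~ eP P && phi) ==> (0 < aP P).
Proof.
move=> sPG; apply/implyP => /andP[ne ph]; rewrite eP_a //.
have [t Tt /andP[t1 _]] := phi_wit ph.
rewrite lt0n; apply: contra t1 => D0.
have := reld0 T set0; rewrite -/D D0 gen0 => /esym/trivgP T1.
by move: Tt; rewrite T1 inE.
Qed.

Lemma nim_main n (P : {set gT}) : P \subset G -> #|G :\: P| < n ->
  nim_fuel G n P = fv phi (aP P) (bP P) (eP P) (pP P).
Proof.
elim: n P => [//|n IH] P sPG lt /=.
case: ifP => [genP | ngen].
  by move: genP; rewrite gen_iff // => /andP[/eqP-> /eqP->]; rewrite fv00.
have nz : (0 < aP P) || (0 < bP P).
  by move: ngen; rewrite gen_iff // !lt0n -negb_and => ->.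
have v := validP sPG.
have card g : g \in G -> g \notin P -> #|G :\: (g |: P)| < n.
  move=> Gg gP.
  have -> : G :\: (g |: P) = (G :\: P) :\ g by apply/setP=> x; rewrite !inE negb_or andbA.
  by move: lt; rewrite (cardsD1 g (G :\: P)) inE gP Gg.
have opt g : g \in G -> g \notin P ->
   fv phi (aP (g |: P)) (bP (g |: P)) (eP (g |: P)) (~~ pP P) \in
   [seq nim_fuel G n (g0 |: P) | g0 <- enum (G :\: P)].
  move=> Gg gP; rewrite -(pP_succ gP); apply/mapP; exists g; first by rewrite mem_enum inE gP Gg.
  by rewrite IH ?card // subUset sub1set Gg.
apply: mex_eq.
  apply/mapP => [[g]]; rewrite mem_enum inE => /andP[gP Gg].
  have sQ : g |: P \subset G by rewrite subUset sub1set Gg.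
  rewrite IH ?card // pP_succ // => /eqP; rewrite eq_sym; apply/negP.
  apply: fv_succ' => //; rewrite ?aP_succ ?bP_succ //.
  - by apply/implyP => lta; apply: eP_of_lt => //; apply: leq_trans lta (aP_le P).
  - by apply/implyP; apply: eP_succ.
  - apply/implyP => /andP[/andP[/eqP ea ne] ee]; apply: (e_phi sQ ee).
    by rewrite ea eP_a.
move=> k kv; have := fv_must v nz kv.
case/orP => [/andP[apos /eqP <-]|].
  by have [g [Gg gP ea eb ee]] := real_a sPG apos; move: (opt g Gg gP); rewrite ea eb ee.
case/orP => [/and3P[apos bpos /eqP <-]|].
  by have [g [Gg gP ea eb ee]] := real_ab sPG apos bpos; move: (opt g Gg gP); rewrite ea eb ee.
case/orP => [/andP[bpos /eqP <-]|].
  by have [g [Gg gP ea eb ee]] := real_b sPG bpos; move: (opt g Gg gP); rewrite ea eb ee.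
case/orP => [/andP[/eqP pe /eqP <-]|].
  by have [g [Gg gP ea eb ee]] := real_stay sPG pe; move: (opt g Gg gP); rewrite ea eb ee.
case/orP => [/and3P[ne ph /eqP <-]|].
  by have [g [Gg gP ea eb ee]] := real_phi sPG ne ph; move: (opt g Gg gP); rewrite ea eb ee.
case/and4P => [ne ph bpos /eqP <-].
by have [g [Gg gP ea eb ee]] := real_phib sPG ne ph bpos; move: (opt g Gg gP); rewrite ea eb ee.
Qed.

Lemma nimGEN_fv : nimGEN G = fv phi D (reld H set0) false false.
Proof.
rewrite /nimGEN /nim_pos nim_main ?sub0set ?setD0 //.
by rewrite /aP /bP /eP /pP !imset0 gen0 cards1 cards0.
Qed.

End Game.


Section Gen2.
Variable gT : finGroupType.

Lemma dgen_reld (K : {group gT}) : dgen K = reld K set0.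
Proof.
rewrite /dgen; apply: find_iota_min.
- have [A [sAK cA sK]] := reld_wit K set0; apply/existsP; exists A.
  rewrite sAK cA eqxx /= eqEsubset gen_subG sAK /=.
  by rewrite set0U in sK.
- move=> k lt; apply/existsP => [[A /and3P[sAK /eqP cA /eqP gA]]].
  have := reld_min (Y := set0) sAK; rewrite set0U gA subxx cA => /(_ isT).
  by rewrite leqNgt lt.
- rewrite ltnS; apply: leq_trans (reld_min (A := K) (subxx _) _) _ => //.
  by rewrite set0U genGid.
Qed.

Lemma reld0_triv (K : {group gT}) : (reld K set0 == 0) = (K :==: 1).
Proof. by rewrite reld0 gen0 subG1. Qed.

Lemma reld_le1_cyclic (K : {group gT}) : reld K set0 <= 1 -> cyclic K.
Proof.
have [A [sAK cA sK]] := reld_wit K set0; rewrite set0U in sK.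
rewrite -cA leq_eqVlt ltnS leqn0 => /orP[/cards1P[x Ax] | /eqP/eqP].
  rewrite Ax in sK sAK; apply/cyclicP; exists x; apply/eqP.
  by rewrite eqEsubset sK cycle_subG -sub1set sAK.
rewrite cards_eq0 => /eqP A0; rewrite A0 gen0 in sK.
by rewrite (trivgP sK) cyclic1.
Qed.

Lemma cyclic_reld_le1 (K : {group gT}) : cyclic K -> reld K set0 <= 1.
Proof.
case/cyclicP => x eK; apply: leq_trans (reld_min (A := [set x]) _ _) _.
- by rewrite sub1set eK cycle_id.
- by rewrite set0U eK.
- by rewrite cards1.
Qed.

Lemma cyclic_isoZp (K : {group gT}) : cyclic K -> K \isog Zp #|K|.
Proof.
case/cyclicP => x eK; have -> : #|K| = #[x] by rewrite eK.
have -> : K = <[x]>%G by apply: val_inj.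
rewrite isog_sym; exact: Zp_isog.
Qed.

Lemma isoZp_cyclic (K : {group gT}) n : 1 < n -> K \isog Zp n -> cyclic K /\ #|K| = n.
Proof.
move=> n1 iso; split; last by rewrite (card_isog iso) card_Zp //; apply: ltnW.
rewrite (isog_cyclic iso) /= /Zp n1 Zp_cycle; exact: cycle_cyclic.
Qed.

End Gen2.

Lemma sndX (g1 g2 : finGroupType) (x : g1 * g2) n : (x ^+ n).2 = x.2 ^+ n.
Proof. by elim: n => // n IH; rewrite !expgS -IH. Qed.

Section Classify.
Variables (gT : finGroupType) (G T H : {group gT}).
Hypotheses (hG : T \x H = G) (hT : 2.-group T) (hH : odd #|H|).

Lemma oddG_T : odd #|G| = (T :==: 1).
Proof.
rewrite trivg_card1 -(dprod_card hG) oddM hH andbT (card_pgroup hT).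
case: (logn 2 #|T|) => [|m] //; rewrite expnS oddM andFb; apply/esym/eqP; lia.
Qed.

Lemma T1_phi : T :=: 1 -> phi T = false.
Proof.
move=> T1; apply/exists_inP => [[t]]; rewrite T1 inE => /eqP ->.
by rewrite eqxx.
Qed.

Lemma T1_GH : T :=: 1 -> G :=: H.
Proof. by move=> T1; move: hG; rewrite T1 dprod1g => <-. Qed.

Lemma D_cyc : cyclic T -> T :!=: 1 -> D T = 1%N.
Proof.
move=> cT nT; apply/eqP; rewrite eqn_leq cyclic_reld_le1 // lt0n /D reld0_triv.
exact: nT.
Qed.

Lemma phi_card2 : #|T| = 2 -> ~~ phi T.
Proof.
move=> c2; apply/exists_inP => [[t Tt /andP[t1 /eqP rt]]].
have cT : cyclic T by apply: prime_cyclic; rewrite c2.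
have nT : T :!=: 1 by rewrite trivg_card1 c2.
move: rt; rewrite (D_cyc cT nT).
have eT : <[t]> = T :> {set gT}.
  by apply/eqP; rewrite eqEcard cycle_subG Tt c2 /= -orderE order_gt1 t1.
have eT' : <<[set t]>> = T :> {set gT} := eT.
have : reld T [set t] == 0 by rewrite reld0 eT' subxx.
by move/eqP ->.
Qed.

Lemma phi_card4 : cyclic T -> 4 %| #|T| -> phi T.
Proof.
move=> cT d4; have cT' := cT; case/cyclicP: cT => t eT.
have Tt : t \in T by rewrite eT cycle_id.
have ot : #[t] = #|T| by rewrite eT.
have T4 : 4 <= #|T| by apply: dvdn_leq.
have nT : T :!=: 1 by rewrite trivg_card1; apply/eqP => e; rewrite e in T4.
apply/exists_inP; exists (t ^+ 2); first by rewrite groupX.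
rewrite (D_cyc cT' nT); apply/andP; split.
  apply/eqP => t21; have : #[t] %| 2 by rewrite order_dvdn t21.
  by rewrite ot => /(dvdn_trans d4).
rewrite eqn_leq (leq_trans (reld_mono _ (sub0set [set t ^+ 2])) (cyclic_reld_le1 cT')) /=.
rewrite lt0n reld0; apply/negP => sT; have := subset_leq_card sT.
rewrite -[#|<<_>>|]/(#[t ^+ 2]) orderXdiv; last by rewrite ot (dvdn_trans _ d4).
by rewrite ot leqNgt ltn_Pdiv.
Qed.


Section Klein.
Hypotheses (c4 : #|T| = 4) (ex2 : forall t, t \in T -> t ^+ 2 = 1).

Lemma k_ord u : u \in T -> u != 1 -> #[u] = 2.
Proof.
move=> Tu u1; have d : #[u] %| 2 by rewrite order_dvdn ex2.
have := @dvdn_leq _ 2 isT d; have := order_gt1 u; rewrite u1 => g1 l2; lia.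
Qed.

Lemma k_gen u y : u \in T -> u != 1 -> y \in T -> y \notin <[u]> ->
  T \subset <<[set u; y]>>.
Proof.
move=> Tu u1 Ty yu; set K := <<[set u; y]>>.
have sK : K \subset T by rewrite gen_subG subUset !sub1set Tu Ty.
have uK : <[u]> \subset K by rewrite cycle_subG mem_gen // !inE eqxx.
have yK : y \in K by rewrite mem_gen // !inE eqxx orbT.
have lt : #|<[u]>| < #|K|.
  by apply: proper_card; apply/properP; split => //; exists y.
have dK : #|K| %| 4 by rewrite -c4 cardSg.
have K4 : #|K| = 4.
  move: lt; rewrite -orderE k_ord // => lt.
  have := @dvdn_leq _ 4 isT dK => le.
  have [e3|e4] : #|K| = 3 \/ #|K| = 4 by lia.
    by move: dK; rewrite e3.
  exact: e4.
by have /eqP <- : K == T :> {set gT} by rewrite eqEcard sK c4 K4.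
Qed.

Lemma k_other u : u \in T -> u != 1 -> exists2 y, y \in T & y \notin <[u]>.
Proof.
move=> Tu u1; have /subsetPn[y Ty yu] : ~~ (T \subset <[u]>).
  apply/negP => /subset_leq_card; rewrite c4 -orderE k_ord //.
by exists y.
Qed.

Lemma klein_D : D T = 2 /\ ~~ phi T.
Proof.
have nT : T :!=: 1 by rewrite trivg_card1 c4.
have [u Tu u1] := trivgPn _ nT.
have [y Ty yu] := k_other Tu u1.
have D2 : D T <= 2.
  apply: leq_trans (reld_min (A := [set u; y]) _ _) _.
  - by rewrite subUset !sub1set Tu Ty.
  - by rewrite set0U; exact: (k_gen Tu u1 Ty yu).
  - by rewrite (cardsU1 u [set y]) cards1; case: (u \notin [set y]).
have DT2 : D T = 2.
  apply/eqP; rewrite eqn_leq D2 /=; rewrite ltnNge; apply/negP => /reld_le1_cyclic.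
  case/cyclicP => x eT.
  have Tx : x \in T by rewrite eT cycle_id.
  have : #[x] = 4 by rewrite -c4 eT.
  have : #[x] %| 2 by rewrite order_dvdn ex2.
  by move=> d e; rewrite e in d.
split => //.
apply/exists_inP => [[t Tt /andP[t1 /eqP rt]]].
have [z Tz zt] := k_other Tt t1.
have : reld T [set t] <= 1.
  apply: leq_trans (reld_min (A := [set z]) _ _) _.
  - by rewrite sub1set.
  - exact: (k_gen Tt t1 Tz zt).
  - by rewrite cards1.
by rewrite rt DT2.
Qed.

End Klein.


Lemma C3_klein : G \isog setX (setX (Zp 2) (Zp 2)) H ->
  #|T| = 4 /\ (forall t, t \in T -> t ^+ 2 = 1).
Proof.
move=> iso.
have c4 : #|T| = 4.
  have cK := card_isog iso; rewrite !cardsX !card_Zp // -(dprod_card hG) in cK.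
  by apply/eqP; rewrite -(eqn_pmul2r (cardG_gt0 H)) cK.
split => // t Tt.
have Gt : t \in G by apply: (subsetP (TG hG)).
case/isogP: iso => f injf fG.
have fK : f t \in setX (setX (Zp 2) (Zp 2)) H by rewrite -fG mem_morphim.
have t4 : t ^+ 4 = 1 by rewrite -c4 expg_cardG.
have fk4 : (f t) ^+ 4 = 1 by rewrite -morphX // t4 morph1.
apply: (injmP injf); rewrite ?groupX ?group1 // morphX // morph1.
move: (f t) fK fk4 => [[a b] h]; rewrite !inE /= => Hh k4.
have h1 : h = 1.
  have := congr1 snd k4; rewrite sndX /= => h4.
  have d4 : #[h] %| 4 by rewrite order_dvdn h4.
  have oh : odd #[h] by apply: dvdn_odd (order_dvdG Hh) hH.
  apply/eqP; rewrite -order_eq1.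
  have := @dvdn_leq _ 4 isT d4; have := order_gt0 h.
  case: #[h] d4 oh => [|[|[|[|[|n]]]]] //.
have z2 (c : 'Z_2) : c ^+ 2 = 1.
  by have := expg_cardG (in_setT c); rewrite cardsT card_ord.
have zz (c : 'Z_2) : c * c = 1 by rewrite -(z2 c) expgS expg1.
rewrite h1 expgS expg1.
have -> : (a, b, 1) * (a, b, 1) = (a * a, b * b, 1 * 1) by [].
by rewrite !zz mulg1.
Qed.


Lemma klein_inv : D T = 2 -> ~~ phi T -> G \isog setX (setX (Zp 2) (Zp 2)) H.
Proof.
move=> D2 nphi.
have Phi1 : 'Phi(T) = 1.
  apply/eqP/trivgPn => [[u Pu u1]]; apply: (negP nphi); apply/exists_inP.
  have Tu : u \in T by apply: (subsetP (Phi_sub T)).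
  exists u => //; rewrite u1 /= eqn_leq reld_mono ?sub0set //=.
  have [A [sAK cA sK]] := reld_wit T [set u]; rewrite -cA /D.
  apply: (reld_min sAK); rewrite set0U.
  suff <- : <<A>> = T :> {set gT} by [].
  apply: Phi_nongen; apply/eqP; rewrite eqEsubset /joing gen_subG subUset Phi_sub sAK /=.
  apply: subset_trans sK _; apply: genS; apply: setSU; by rewrite sub1set.
have ab : 2.-abelem T by rewrite -(trivg_Phi hT) Phi1.
have aT : abelian T := abelem_abelian ab.
have o2 x : x \in T -> x != 1 -> #[x] = 2 by move=> Tx x1; apply: abelem_order_p ab Tx x1.
have [A [sAT cA sK]] := reld_wit T set0; rewrite set0U in sK.
move: cA; rewrite -/(D T) D2 => /eqP/cards2P[x [y [_ eA]]].
rewrite eA in sAT sK; move: sAT; rewrite subUset !sub1set => /andP[Tx Ty].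
have ncyc z : z \in T -> T \subset <[z]> -> False.
  move=> Tz sTz; have : cyclic T.
    by apply/cyclicP; exists z; apply/eqP; rewrite eqEsubset sTz cycle_subG.
  by move/cyclic_reld_le1; rewrite -/(D T) D2.
have xy : x \notin <[y]>.
  apply/negP => xy; apply: (ncyc y Ty); apply: subset_trans sK _.
  by rewrite gen_subG subUset !sub1set xy cycle_id.
have yx : y \notin <[x]>.
  apply/negP => yx; apply: (ncyc x Tx); apply: subset_trans sK _.
  by rewrite gen_subG subUset !sub1set yx cycle_id.
have x1 : x != 1 by apply: contra xy => /eqP ->; rewrite group1.
have y1 : y != 1 by apply: contra yx => /eqP ->; rewrite group1.
have cxy : <[y]> \subset 'C(<[x]>).
  by apply: (sub_abelian_cent2 aT); rewrite cycle_subG ?Tx ?Ty.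
have Txy : <[x]> \x <[y]> = T.
  rewrite dprodE //; last first.
    by apply: prime_TIg; rewrite -?orderE ?o2 // cycle_subG.
  rewrite -cent_joinEr //; apply/eqP; rewrite eqEsubset /joing.
  rewrite gen_subG subUset !cycle_subG Tx Ty /=.
  apply: subset_trans sK _; apply: genS; rewrite subUset !sub1set.
  by rewrite !inE !cycle_id orbT.
have ix : <[x]> \isog setX (Zp 2) (1 : {set 'Z_2}).
  apply: (isog_trans _ (isog_setX1 _ (Zp_group 2))); rewrite isog_sym -(o2 x Tx x1).
  exact: Zp_isog.
have iy : <[y]> \isog setX (1 : {set 'Z_2}) (Zp 2).
  apply: (isog_trans _ (isog_set1X _ (Zp_group 2))); rewrite isog_sym -(o2 y Ty y1).
  exact: Zp_isog.
have iT : T \isog setX (Zp 2) (Zp 2).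
  exact: isog_dprod Txy (setX_dprod (Zp_group 2) (Zp_group 2)) ix iy.
apply: (isog_dprod hG (setX_dprod (setX_group (Zp_group 2) (Zp_group 2)) H)).
  exact: (isog_trans iT (isog_setX1 gT (setX_group (Zp_group 2) (Zp_group 2)))).
exact: (isog_set1X _ H).
Qed.

End Classify.


Lemma odd_dvd2 (m : nat) : odd m -> m %| 2 -> m = 1%N.
Proof.
move=> om d; have := @dvdn_leq _ 2 isT d.
by case: m om d => [|[|[|m]]].
Qed.

Unset Implicit Arguments. Set Strict Implicit. Set Printing Implicit Defensive.

Theorem theorem4p11 (gT : finGroupType) (G T H : {group gT})
  (hG : T \x H = G) (hT : 2.-group T) (hH : odd #|H|) :
  let v := nimGEN G in
  let C1 := odd #|G| /\ 3 <= dgen G in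
  let C2 := exists k : nat, 0 < k /\ G \isog Zp (4 * k) in
  let C3 := G \isog setX (setX (Zp 2) (Zp 2)) H /\ dgen H <= 2 in
  let C4 := G \isog Zp 2 in
  let C5 := odd #|G| /\ (dgen G = 1%N \/ dgen G = 2%N) in
  let C6 := exists k : nat, 0 < k /\ G \isog Zp (4 * k + 2) in
  (C1 -> v = 1%N) /\ (C2 -> v = 1%N) /\ (C3 -> v = 1%N) /\ (C4 -> v = 2%N) /\
  (C5 -> v = 2%N) /\ (C6 -> v = 4%N) /\
  (~ (C1 \/ C2 \/ C3 \/ C4 \/ C5 \/ C6) -> v = 0%N).
Proof.
cbv zeta; rewrite (nimGEN_fv hG hT hH).
set B := reld H set0.
have dH : dgen H = B := dgen_reld H.
have oddT := oddG_T hG hT hH.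
have cardG : (#|T| * #|H|)%N = #|G| := dprod_card hG.
have T1facts : T :=: 1 -> [/\ D T = 0%N, phi T = false & dgen G = B].
  move=> T1; split; first by apply/eqP; rewrite reld0_triv T1 eqxx.
    exact: T1_phi.
  by have -> : G = H by apply: val_inj; apply: (T1_GH hG).
have [m eTm] : exists m, #|T| = (2 ^ m)%N by exists (logn 2 #|T|); apply: card_pgroup.
have cop : coprime #|T| #|H| by rewrite eTm coprimeXl // coprime2n.
have cycG : cyclic T -> cyclic H -> cyclic G.
  by move=> cT cH; rewrite (cyclic_dprod hG cT cH).
have HT2 : #|T| = 2 -> ~~ phi T /\ D T = 1%N.
  move=> c2; split; first exact: phi_card2.
  apply: D_cyc; first by apply: prime_cyclic; rewrite c2.
  by rewrite trivg_card1 c2.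
split.
  case=> oG d3; have [D0 ph dG] := T1facts (eqP (etrans (esym oddT) oG)).
  rewrite D0 ph; rewrite dG in d3.
  by case: (B) d3 => [|[|[|b]]].
split.
  case=> k [k0 iso]; have k1 : (1 < 4 * k)%N by lia.
  have [cG cG4] := isoZp_cyclic k1 iso.
  have cT : cyclic T by apply: cyclicS cG; apply: (TG hG).
  have cH : cyclic H by apply: cyclicS cG; apply: (HG hG).
  have d4 : (4 %| #|T|)%N.
    rewrite -(Gauss_dvdl _ (_ : coprime 4 #|H|)); first by rewrite cardG cG4 dvdn_mulr.
    by rewrite (_ : 4 = 2 ^ 2)%N // coprimeXl // coprime2n.
  have nT : T :!=: 1 by rewrite trivg_card1; apply/eqP => e; rewrite e in d4.
  rewrite (D_cyc cT nT) (phi_card4 cT d4).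
  have := cyclic_reld_le1 cH; rewrite -/B.
  by case: (B) => [|[|b]].
split.
  case=> iso dH2; have [c4 ex2] := C3_klein hG hH iso.
  have [D2 nph] := klein_D hT hH c4 ex2.
  rewrite D2 (negbTE nph); rewrite dH in dH2.
  by case: (B) dH2 => [|[|[|b]]].
split.
  move=> iso; have [cG cG2] := isoZp_cyclic (isT : 1 < 2)%N iso.
  have H1 : #|H| = 1%N.
    apply: (@odd_dvd2 _ hH); rewrite -cG2 -cardG; exact: dvdn_mull.
  have c2 : #|T| = 2 by rewrite -cG2 -cardG H1 muln1.
  have [nph D1] := HT2 c2.
  have B0 : B = 0%N by apply/eqP; rewrite /B reld0_triv trivg_card1 H1.
  by rewrite D1 (negbTE nph) B0.
split.
  case=> oG d12; have [D0 ph dG] := T1facts (eqP (etrans (esym oddT) oG)).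
  rewrite D0 ph; rewrite dG in d12.
  by case: d12 => ->.
split.
  case=> k [k0 iso]; have k1 : (1 < 4 * k + 2)%N by lia.
  have [cG cGk] := isoZp_cyclic k1 iso.
  have cH : cyclic H by apply: cyclicS cG; apply: (HG hG).
  have c2 : #|T| = 2.
    case: m eTm => [|[|m]] eTm //.
      have eH : #|H| = (4 * k + 2)%N by move: cardG; rewrite eTm expn0 mul1n cGk.
      by move: hH; rewrite eH oddD oddM.
    have : (4 %| 4 * k + 2)%N.
      rewrite -cGk -cardG eTm !expnS !mulnA; apply: dvdn_mulr; exact: dvdn_mulr.
    by rewrite dvdn_addr ?dvdn_mulr.
  have [nph D1] := HT2 c2.
  have Hk : #|H| = (2 * k + 1)%N by move: cardG; rewrite c2 cGk; lia.
  have nH : H :!=: 1 by rewrite trivg_card1 Hk; lia.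
  have B1 : B = 1%N by apply: D_cyc.
  by rewrite D1 (negbTE nph) B1.
move=> nC.
case D0: (D T) => [|[|[|d]]].
- have T1 : T :=: 1 by apply/eqP; rewrite -reld0_triv; apply/eqP.
  have [_ ph dG] := T1facts T1; rewrite ph.
  have oG : odd #|G| by rewrite oddT T1 eqxx.
  case: (B) dG => [|[|[|b]]] dG //; exfalso; apply: nC.
  + by right; right; right; right; left; split => //; left.
  + by right; right; right; right; left; split => //; right.
  + by left; split => //; rewrite dG.
- have cT : cyclic T by apply: reld_le1_cyclic; rewrite -/(D T) D0.
  have nT : T :!=: 1 by rewrite -reld0_triv -/(D T) D0.
  case: m eTm => [|[|m]] eTm.
  + by move: nT; rewrite trivg_card1 eTm.
  + have [nph _] := HT2 eTm; rewrite (negbTE nph).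
    case BE: (B) => [|[|b]] //; exfalso; apply: nC.
    * have H1 : H :=: 1 by apply/eqP; rewrite -reld0_triv -/B BE.
      have eGT : G = T by apply: val_inj; move: hG; rewrite /= H1 dprodg1 => <-.
      right; right; right; left; rewrite eGT.
      by have := cyclic_isoZp cT; rewrite eTm.
    * have cH : cyclic H by apply: reld_le1_cyclic; rewrite -/B BE.
      have nH : H :!=: 1 by rewrite -reld0_triv -/B BE.
      have H3 : 2 < #|H|.
        have : 1 < #|H| by rewrite cardG_gt1.
        by move: hH; case: #|H| => [|[|[|]]].
      right; right; right; right; right; exists (#|H| %/ 2)%N; split.
        by rewrite divn_gt0 // ltnW.
      have -> : (4 * (#|H| %/ 2) + 2)%N = #|G|.
        rewrite -cardG eTm expn1.
        have := divn_eq #|H| 2; rewrite modn2 hH; lia.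
      exact: cyclic_isoZp (cycG cT cH).
  + have d4 : (4 %| #|T|)%N by rewrite eTm !expnS mulnA dvdn_mulr.
    rewrite (phi_card4 cT d4).
    case BE: (B) => [|[|b]] //; exfalso; apply: nC; right; left.
    * have cH : cyclic H by apply: reld_le1_cyclic; rewrite -/B BE.
      exists (2 ^ m * #|H|)%N; split; first by rewrite muln_gt0 expn_gt0 cardG_gt0.
      rewrite mulnA (_ : 4 * 2 ^ m = #|T|)%N; last by rewrite eTm !expnS mulnA.
      by rewrite cardG; exact: cyclic_isoZp (cycG cT cH).
    * have cH : cyclic H by apply: reld_le1_cyclic; rewrite -/B BE.
      exists (2 ^ m * #|H|)%N; split; first by rewrite muln_gt0 expn_gt0 cardG_gt0.
      rewrite mulnA (_ : 4 * 2 ^ m = #|T|)%N; last by rewrite eTm !expnS mulnA.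
      by rewrite cardG; exact: cyclic_isoZp (cycG cT cH).
- case ph: (phi T) => //.
  case BE: (B) => [|[|[|b]]] //; exfalso; apply: nC; right; right; left;
    (split; [ apply: (klein_inv hG hT) => //; by rewrite ph | by rewrite dH BE ]).
- by case: (phi T).
Qed.
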